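(* Consider the energy consumption game $\mathcal{G}^{\mathrm{HP}}_\alpha$ with hourly proportional billing described in the context, with quadratic costs $C_h(x)=a_{1,h}x+a_{2,h}x^2$, for a fixed $\alpha\in[0,1]$. Then $\mathcal{G}^{\mathrm{HP}}_\alpha$ is an exact potential game with potential $$W^{\mathrm{HP}}_\alpha(\boldsymbol{\ell})=(1-\alpha)\sum_{h\in\mathcal{H}}\Big[\frac{a_{2,h}}{2}\Big((\ell^h)^2+\sum_{n\in\mathcal N}(\ell_n^h)^2\Big)+a_{1,h}\ell^h\Big]-\alpha\sum_{n\in\mathcal{N}}u_n(\boldsymbol{\ell}_n),$$ i.e. for every $n$, every $\boldsymbol{\ell}_{-n}\in\prod_{m\neq n}\mathcal{L}_m$ and every $\boldsymbol{\ell}_n,\boldsymbol{\ell}_n'\in\mathcal{L}_n$, $f_n^\alpha(\boldsymbol{\ell}_n',\boldsymbol{\ell}_{-n})-f_n^\alpha(\boldsymbol{\ell}_n,\boldsymbol{\ell}_{-n})=W^{\mathrm{HP}}_\alpha(\boldsymbol{\ell}_n',\boldsymbol{\ell}_{-n})-W^{\mathrm{HP}}_\alpha(\boldsymbol{\ell}_n,\boldsymbol{\ell}_{-n})$.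
   Context: There is a finite set of users $\mathcal{N}=\{1,\dots,N\}$ and a finite set of time periods $\mathcal{H}$. Each user $n$ chooses a load profile $\boldsymbol{\ell}_n=(\ell_n^h)_{h\in\mathcal{H}}\in\mathbb{R}^{\mathcal H}$ in the feasible set $\mathcal{L}_n=\{\boldsymbol{\ell}_n:\sum_{h}\ell_n^h=E_n,\ \underline{\ell}_n^h\le \ell_n^h\le\overline{\ell}_n^h\ \forall h\}$ with given $E_n$ and bounds; $\boldsymbol{\ell}_{-n}=(\boldsymbol{\ell}_m)_{m\ne n}$, $\ell^h=\sum_n\ell_n^h$. The cost of period $h$ is $C_h(x)=a_{1,h}x+a_{2,h}x^2$ with real coefficients. Each user has a preferred profile $\hat{\boldsymbol{\ell}}_n$, weight $\omega_n>0$ and utility $u_n(\boldsymbol{\ell}_n)=-\omega_n\sum_h(\ell_n^h-\hat\ell_n^h)^2$. The hourly proportional (HP) bill is $b_n^{\mathrm{HP}}(\boldsymbol{\ell})=\sum_h\frac{\ell_n^h}{\ell^h}C_h(\ell^h)=\sum_h\ell_n^h(a_{1,h}+a_{2,h}\ell^h)$ (the right-hand form also defining it when $\ell^h=0$). User $n$'s cost is $f_n^\alpha(\boldsymbol{\ell}_n,\boldsymbol{\ell}_{-n})=(1-\alpha)b_n^{\mathrm{HP}}(\boldsymbol{\ell})-\alpha u_n(\boldsymbol{\ell}_n)$, minimized over $\mathcal L_n$. The game $\mathcal{G}^{\mathrm{HP}}_\alpha$ has players $\mathcal N$, strategy sets $\mathcal L_n$ and costs $f_n^\alpha$. *)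

(* Defs.v *)
From mathcomp Require Import all_boot all_order all_algebra.
Set Implicit Arguments. Unset Strict Implicit. Unset Printing Implicit Defensive.
Import Order.TTheory GRing.Theory Num.Theory.
Local Open Scope ring_scope.

Section Game.
Variables (R : realFieldType) (N : nat) (H : finType).

(* a joint load profile: l n h = load of user n in period h *)
Definition profile := 'I_N -> H -> R.

Definition total_load (l : profile) (h : H) : R := \sum_(m < N) l m h.

Definition feasible (E : 'I_N -> R) (lo up : 'I_N -> H -> R)
  (n : 'I_N) (x : H -> R) : Prop :=
  \sum_(h : H) x h = E n /\ forall h, lo n h <= x h <= up n h.

Definition update (l : profile) (n : 'I_N) (x : H -> R) : profile :=
  fun m => if m == n then x else l m.

Definition utility (omega : 'I_N -> R) (lhat : 'I_N -> H -> R)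
  (n : 'I_N) (x : H -> R) : R :=
  - omega n * \sum_(h : H) (x h - lhat n h) ^+ 2.

Definition bill_HP (a1 a2 : H -> R) (l : profile) (n : 'I_N) : R :=
  \sum_(h : H) l n h * (a1 h + a2 h * total_load l h).

Definition cost_HP (alpha : R) (a1 a2 : H -> R) (omega : 'I_N -> R)
  (lhat : 'I_N -> H -> R) (l : profile) (n : 'I_N) : R :=
  (1 - alpha) * bill_HP a1 a2 l n - alpha * utility omega lhat n (l n).

Definition potential_HP (alpha : R) (a1 a2 : H -> R) (omega : 'I_N -> R)
  (lhat : 'I_N -> H -> R) (l : profile) : R :=
  (1 - alpha) * \sum_(h : H)
     (a2 h / 2 * (total_load l h ^+ 2 + \sum_(m < N) l m h ^+ 2)
      + a1 h * total_load l h)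
  - alpha * \sum_(m < N) utility omega lhat m (l m).
End Game.

(* Main.v *)
Require Import Defs.
From mathcomp Require Import all_boot all_order all_algebra.
From mathcomp Require Import ring.
Import Order.TTheory GRing.Theory Num.Theory.
Local Open Scope ring_scope.

Section Aux.
Variables (R : realFieldType) (N : nat) (H : finType).

Lemma sum_upd (F : 'I_N -> (H -> R) -> R) (l : profile R N H) n y :
  \sum_(m < N) F m (update l n y m) =
  F n y + \sum_(m < N | m != n) F m (l m).
Proof.
rewrite (bigD1 n) //= /update eqxx; congr (_ + _).
by apply: eq_bigr => m /negbTE ->.
Qed.
End Aux.

Theorem theorem2 (R : realFieldType) (N : nat) (H : finType)
  (a1 a2 : H -> R) (E : 'I_N -> R) (lo up : 'I_N -> H -> R)
  (omega : 'I_N -> R) (lhat : 'I_N -> H -> R) (alpha : R) :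
  (forall m, 0 < omega m) ->
  0 <= alpha <= 1 ->
  forall (n : 'I_N) (l : profile R N H),
  (forall m, m != n -> feasible E lo up m (l m)) ->
  forall x x' : H -> R,
  feasible E lo up n x -> feasible E lo up n x' ->
  cost_HP alpha a1 a2 omega lhat (update l n x') n
    - cost_HP alpha a1 a2 omega lhat (update l n x) n
  = potential_HP alpha a1 a2 omega lhat (update l n x')
    - potential_HP alpha a1 a2 omega lhat (update l n x).
Proof.
move=> _ _ n l _ x x' _ _.
rewrite /cost_HP /potential_HP /bill_HP /total_load.
have un y : update l n y n = y by rewrite /update eqxx.
rewrite !un.
have T y h : \sum_(m < N) update l n y m h = y h + \sum_(m < N | m != n) l m h.
  rewrite (bigD1 n) //= un; congr (_ + _); apply: eq_bigr => m /negbTE mn.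
  by rewrite /update mn.
have Q y h : \sum_(m < N) update l n y m h ^+ 2 = y h ^+ 2 + \sum_(m < N | m != n) l m h ^+ 2.
  rewrite (bigD1 n) //= un; congr (_ + _); apply: eq_bigr => m /negbTE mn.
  by rewrite /update mn.
have Uu y : \sum_(m < N) utility omega lhat m (update l n y m) =
   utility omega lhat n y + \sum_(m < N | m != n) utility omega lhat m (l m).
  rewrite (bigD1 n) //= un; congr (_ + _); apply: eq_bigr => m /negbTE mn.
  by rewrite /update mn.
rewrite !Uu.
set S := fun h => \sum_(m < N | m != n) l m h.
set Qr := fun h => \sum_(m < N | m != n) l m h ^+ 2.
set U := \sum_(m < N | m != n) utility omega lhat m (l m).
have B y : \sum_h y h * (a1 h + a2 h * \sum_(m < N) update l n y m h)
   = \sum_h y h * (a1 h + a2 h * (y h + S h)) by apply: eq_bigr => h _; rewrite T.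
have P y : \sum_h (a2 h / 2 * ((\sum_(m < N) update l n y m h) ^+ 2
     + \sum_(m < N) update l n y m h ^+ 2) + a1 h * \sum_(m < N) update l n y m h)
   = \sum_h (a2 h / 2 * ((y h + S h) ^+ 2 + (y h ^+ 2 + Qr h)) + a1 h * (y h + S h)).
  by apply: eq_bigr => h _; rewrite T Q.
rewrite !B !P.
have -> : forall A B C D : R, (1 - alpha) * A - alpha * C - ((1 - alpha) * B - alpha * D)
   = (1 - alpha) * (A - B) - alpha * (C - D) by move=> *; ring.
have -> : forall A B C D : R, (1 - alpha) * A - alpha * (C + U) - ((1 - alpha) * B - alpha * (D + U))
   = (1 - alpha) * (A - B) - alpha * (C - D) by move=> *; ring.
congr (_ * _ - _).
rewrite -!sumrB; apply: eq_bigr => h _.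
rewrite /S /Qr; field; done.
Qed.
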